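(* Fix $D,\alpha,\theta>0$. There is a constant $C=C(D,\alpha,\theta)$ such that for every finite connected graph $G$ on $n$ vertices satisfying (bal), (mix), (esc) with parameters $D,\alpha,\theta$ (with $n$ sufficiently large), the following holds. Let $u$ be a $\pi$-distributed vertex and, given $u$, let $X,Y$ be two independent lazy random walks started at $u$. Then for every vertex $v$, $$\mathbb E\left[\,\left|\{(i,j):0\le i,j\le r,\ X_i=Y_j=v\}\right|\,\right]\le \frac{C}{n}.$$
   Context: For a finite connected graph $G=(V,E)$ with $n$ vertices, $d(v)$ is the degree of $v$, $\delta(G),\Delta(G)$ are the minimum and maximum degrees. The lazy random walk $(X_t)$ on $G$ at each step stays put with probability $1/2$ and otherwise moves along a uniformly chosen edge incident to the current vertex. Write $\mathbf p^t(u,v)=\Pr_u(X_t=v)$ and $\pi(v)=d(v)/(2|E|)$. The uniform mixing time is $t_{\mathrm{mix}}(G)=\min\{t\ge0:\max_{u,v\in V}|\mathbf p^t(u,v)/\pi(v)-1|\le 1/2\}$, and the bubble sum is $\mathcal B(G)=\sum_{t=0}^{t_{\mathrm{mix}}(G)}(t+1)\sup_{v}\mathbf p^t(v,v)$. Assumptions with parameters $D,\alpha,\theta>0$: (bal) $\Delta(G)/\delta(G)\le D$; (mix) $t_{\mathrm{mix}}(G)\le n^{1/2-\alpha}$; (esc) $\mathcal B(G)\le\theta$. The run time is $r=n^{1/2-\alpha/3}$ (rounded to an integer). *)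

(* Defs.v *)
From Stdlib Require Import Reals Lra Lia ZArith Arith List.
Open Scope R_scope.

(* A finite simple graph on vertex set {0,..,n-1}. *)
Record graph := Graph {
  gn : nat;
  adj : nat -> nat -> bool
}.

Definition simple_graph (G : graph) : Prop :=
  (forall u v, adj G u v = adj G v u) /\ (forall u, adj G u u = false) /\
  (forall u v, adj G u v = true -> (u < gn G)%nat /\ (v < gn G)%nat).

Inductive reach (G : graph) : nat -> nat -> Prop :=
| reach_refl : forall u, reach G u u
| reach_step : forall u w v, adj G u w = true -> reach G w v -> reach G u v.

Definition connected (G : graph) : Prop :=
  (0 < gn G)%nat /\ forall u v, (u < gn G)%nat -> (v < gn G)%nat -> reach G u v.

Fixpoint rsum (n : nat) (f : nat -> R) : R :=
  match n with O => 0 | S k => rsum k f + f k end.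

(* rmax n f = max (0, f 0, ..., f (n-1)) ; used for nonnegative quantities *)
Fixpoint rmax (n : nat) (f : nat -> R) : R :=
  match n with O => 0 | S k => Rmax (rmax k f) (f k) end.

Definition deg (G : graph) (v : nat) : R :=
  rsum (gn G) (fun w => if adj G v w then 1 else 0).

Definition twoE (G : graph) : R := rsum (gn G) (deg G).

Definition pi (G : graph) (v : nat) : R := deg G v / twoE G.

Definition P1 (G : graph) (u w : nat) : R :=
  (if Nat.eqb u w then /2 else 0) + (if adj G u w then /2 * / deg G u else 0).

Fixpoint pt (G : graph) (t : nat) (u v : nat) : R :=
  match t with
  | O => if Nat.eqb u v then 1 else 0
  | S s => rsum (gn G) (fun w => pt G s u w * P1 G w v)
  end.

Definition is_mixed (G : graph) (t : nat) : Prop :=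
  forall u v, (u < gn G)%nat -> (v < gn G)%nat ->
    Rabs (pt G t u v / pi G v - 1) <= /2.

Definition is_tmix (G : graph) (tm : nat) : Prop :=
  is_mixed G tm /\ forall s, (s < tm)%nat -> ~ is_mixed G s.

Definition bubble (G : graph) (tm : nat) : R :=
  rsum (S tm) (fun t => INR (S t) * rmax (gn G) (fun v => pt G t v v)).

Definition runtime (n : nat) (alpha : R) : nat :=
  Z.to_nat (Int_part (Rpower (INR n) (/2 - alpha / 3) + /2)).

(* E[ #{(i,j) : 0<=i,j<=r, X_i = Y_j = v} ] with u ~ pi, X,Y independent
   lazy walks from u:  sum_u pi(u) sum_{i,j<=r} p^i(u,v) p^j(u,v). *)
Definition expected_collisions (G : graph) (r v : nat) : R :=
  rsum (gn G) (fun u =>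
    rsum (S r) (fun i => rsum (S r) (fun j =>
      pi G u * (pt G i u v * pt G j u v)))).

(* Main.v *)
Require Import Defs.
From Stdlib Require Import Reals Lra Lia ZArith Arith.
Open Scope R_scope.

Lemma rsum_ext n f g : (forall k, (k<n)%nat -> f k = g k) -> rsum n f = rsum n g.
Proof. induction n; intros H; simpl; auto. rewrite IHn by (intros; apply H; lia). rewrite H by lia. auto. Qed.

Lemma rsum_le n f g : (forall k, (k<n)%nat -> f k <= g k) -> rsum n f <= rsum n g.
Proof. induction n; intros H; simpl; try lra. assert (rsum n f <= rsum n g) by (apply IHn; intros; apply H; lia).
 assert (f n <= g n) by (apply H; lia). lra. Qed.

Lemma rsum_plus n f g : rsum n (fun k => f k + g k) = rsum n f + rsum n g.
Proof. induction n; simpl; [lra|]. rewrite IHn. lra. Qed.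

Lemma rsum_scal n c f : rsum n (fun k => c * f k) = c * rsum n f.
Proof. induction n; simpl; [lra|]. rewrite IHn. lra. Qed.

Lemma rsum_const n c : rsum n (fun _ => c) = INR n * c.
Proof. induction n; simpl rsum; [simpl; lra|]. rewrite IHn, S_INR. lra. Qed.

Lemma rsum_nonneg n f : (forall k, (k<n)%nat -> 0 <= f k) -> 0 <= rsum n f.
Proof. intros H. replace 0 with (rsum n (fun _ => 0)). apply rsum_le; auto.
 rewrite rsum_const. lra. Qed.

Lemma rsum_swap n m F : rsum n (fun i => rsum m (fun j => F i j)) = rsum m (fun j => rsum n (fun i => F i j)).
Proof. induction n; simpl. rewrite rsum_const; lra. rewrite IHn, <- rsum_plus. reflexivity. Qed.

Lemma rsum_term n f k : (forall i, (i<n)%nat -> 0<= f i) -> (k<n)%nat -> f k <= rsum n f.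
Proof. induction n; intros H Hk; [lia|]. simpl.
 assert (0 <= rsum n f) by (apply rsum_nonneg; intros; apply H; lia).
 destruct (Nat.eq_dec k n). subst; lra.
 assert (f k <= rsum n f) by (apply IHn; intros; try apply H; lia).
 assert (0 <= f n) by (apply H; lia). lra. Qed.

Lemma rsum_delta n g b : rsum n (fun u => if Nat.eqb u b then g u else 0) = if Nat.ltb b n then g b else 0.
Proof. induction n; simpl; [reflexivity|]. rewrite IHn.
 destruct (Nat.ltb_spec b n), (Nat.ltb_spec b (S n)), (Nat.eqb_spec n b); subst; try lia; lra. Qed.

Lemma rmax_ge n f k : (k < n)%nat -> f k <= rmax n f.
Proof. induction n; intros; [lia|]. simpl. destruct (Nat.eq_dec k n). subst. apply Rmax_r.
 eapply Rle_trans; [apply IHn; lia| apply Rmax_l]. Qed.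

Lemma rmax_nonneg n f : 0 <= rmax n f.
Proof. induction n; simpl; [lra|]. eapply Rle_trans; [apply IHn| apply Rmax_l]. Qed.

Lemma deg_nonneg G x : 0 <= deg G x.
Proof. unfold deg. apply rsum_nonneg. intros; destruct adj; lra. Qed.

Lemma P1_nonneg G u w : 0 <= P1 G u w.
Proof. unfold P1. pose proof (deg_nonneg G u).
 destruct (Nat.eqb u w), (adj G u w); try lra.
 destruct (Req_dec (deg G u) 0) as [E|E]. rewrite E, Rinv_0; lra.
 assert (0 < / deg G u) by (apply Rinv_0_lt_compat; lra). lra.
 destruct (Req_dec (deg G u) 0) as [E|E]. rewrite E, Rinv_0; lra.
 assert (0 < / deg G u) by (apply Rinv_0_lt_compat; lra). lra. Qed.

Lemma pt_nonneg G t u v : 0 <= pt G t u v.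
Proof. revert v. induction t; intros; simpl. destruct Nat.eqb; lra.
 apply rsum_nonneg; intros. apply Rmult_le_pos; auto using P1_nonneg. Qed.

Lemma CK G j i a b : (b < gn G)%nat ->
  rsum (gn G) (fun u => pt G i a u * pt G j u b) = pt G (i + j) a b.
Proof. revert b. induction j; intros b Hb.
 - simpl. rewrite Nat.add_0_r.
   rewrite (rsum_ext _ _ (fun u => if Nat.eqb u b then pt G i a u else 0)).
   rewrite rsum_delta. destruct (Nat.ltb_spec b (gn G)); [reflexivity| lia].
   intros k _. destruct Nat.eqb; lra.
 - rewrite Nat.add_succ_r. simpl.
   rewrite (rsum_ext _ _ (fun u => rsum (gn G) (fun w => pt G i a u * pt G j u w * P1 G w b))).
   rewrite rsum_swap. apply rsum_ext. intros w Hw.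
   rewrite <- (IHj w Hw). rewrite Rmult_comm, <- rsum_scal. apply rsum_ext. intros; ring.
   intros. rewrite <- rsum_scal. apply rsum_ext. intros; ring. Qed.

Section G.
Variable G : graph.
Hypothesis Hs : simple_graph G.
Hypothesis Hdeg : forall x, (x < gn G)%nat -> 0 < deg G x.

Lemma pt1 v w : (v < gn G)%nat -> pt G 1 v w = P1 G v w.
Proof. intros. simpl. rewrite (rsum_ext _ _ (fun u => if Nat.eqb u v then P1 G u w else 0)).
 rewrite rsum_delta. destruct (Nat.ltb_spec v (gn G)); [reflexivity| lia].
 intros k _. rewrite Nat.eqb_sym. destruct Nat.eqb; lra. Qed.

Lemma P1_row x : (x < gn G)%nat -> rsum (gn G) (fun w => P1 G x w) = 1.
Proof. intros Hx. unfold P1. rewrite rsum_plus.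
 rewrite (rsum_ext _ (fun w => if Nat.eqb x w then / 2 else 0) (fun w => if Nat.eqb w x then /2 else 0)).
 rewrite rsum_delta. destruct (Nat.ltb_spec x (gn G)); [|lia].
 rewrite (rsum_ext _ _ (fun w => (/2 * / deg G x) * (if adj G x w then 1 else 0))).
 rewrite rsum_scal. fold (deg G x). specialize (Hdeg x Hx). field. lra.
 intros; destruct adj; lra.
 intros; rewrite Nat.eqb_sym; reflexivity. Qed.

Lemma pt_row s a : (a < gn G)%nat -> rsum (gn G) (fun w => pt G s a w) = 1.
Proof. intros Ha. induction s; simpl.
 - rewrite (rsum_ext _ _ (fun w => if Nat.eqb w a then 1 else 0)). rewrite rsum_delta.
   destruct (Nat.ltb_spec a (gn G)); [reflexivity| lia].
   intros; rewrite Nat.eqb_sym; reflexivity.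
 - rewrite rsum_swap. rewrite <- IHs. apply rsum_ext. intros x Hx.
   rewrite rsum_scal, P1_row; auto; ring. Qed.

Lemma degP1_sym w v : (w < gn G)%nat -> (v < gn G)%nat -> deg G w * P1 G w v = deg G v * P1 G v w.
Proof. intros Hw Hv. destruct Hs as [Hsym _]. unfold P1. rewrite Hsym. rewrite (Nat.eqb_sym w v).
 pose proof (Hdeg w Hw). pose proof (Hdeg v Hv).
 destruct (Nat.eqb_spec v w). subst; reflexivity.
 destruct (adj G v w); field; lra. Qed.

Lemma rev t u v : (u < gn G)%nat -> (v < gn G)%nat -> deg G u * pt G t u v = deg G v * pt G t v u.
Proof. revert u v. induction t; intros u v Hu Hv.
 - simpl. rewrite (Nat.eqb_sym v u). destruct (Nat.eqb_spec u v); subst; lra.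
 - change (pt G (S t) u v) with (rsum (gn G) (fun w => pt G t u w * P1 G w v)).
   rewrite <- rsum_scal.
   rewrite (rsum_ext _ _ (fun w => pt G t w u * (deg G v * P1 G v w))).
   rewrite (rsum_ext _ _ (fun w => deg G v * (pt G 1 v w * pt G t w u))).
   rewrite rsum_scal, CK by auto. reflexivity.
   intros w Hw. rewrite pt1 by auto. ring.
   intros w Hw. rewrite <- degP1_sym by auto. 
   transitivity ((deg G u * pt G t u w) * P1 G w v); [ring|]. rewrite IHt by auto. ring. Qed.

End G.

Lemma rsum_mono n k g : (forall t, 0 <= g t) -> rsum n g <= rsum (n+k) g.
Proof. intros H. induction k. rewrite Nat.add_0_r; lra. rewrite Nat.add_succ_r. simpl. specialize (H (n+k)%nat). lra. Qed.

Lemma shift h b i : rsum b (fun j => h (i+j)%nat) = rsum (i+b) (fun t => if Nat.leb i t then h t else 0).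
Proof. induction b.
 - simpl. rewrite Nat.add_0_r. rewrite (rsum_ext _ _ (fun _ => 0)). rewrite rsum_const; lra.
   intros k Hk. destruct (Nat.leb_spec i k); [lia|reflexivity].
 - rewrite Nat.add_succ_r. simpl. rewrite IHb. destruct (Nat.leb_spec i (i+b)); [reflexivity|lia]. Qed.

Lemma count a t : rsum a (fun i => if Nat.leb i t then 1 else 0) = INR (Nat.min a (S t)).
Proof. induction a; simpl rsum. reflexivity. rewrite IHa.
 destruct (Nat.leb_spec a t).
 - replace (Nat.min (S a) (S t)) with (S (Nat.min a (S t))) by lia. rewrite S_INR.
   replace (Nat.min a (S t)) with a by lia. lra.
 - replace (Nat.min (S a) (S t)) with (Nat.min a (S t)) by lia. lra. Qed.

Lemma double_sum h a b K : (forall t, 0 <= h t) -> (a + b <= K)%nat ->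
  rsum a (fun i => rsum b (fun j => h (i+j)%nat)) <= rsum K (fun t => INR (S t) * h t).
Proof. intros Hh HK.
 apply Rle_trans with (rsum a (fun i => rsum K (fun t => if Nat.leb i t then h t else 0))).
 - apply rsum_le. intros i Hi. rewrite shift. replace K with ((i+b) + (K - (i+b)))%nat by lia.
   apply rsum_mono. intros t; destruct Nat.leb; auto; lra.
 - rewrite rsum_swap. apply rsum_le. intros t _.
   rewrite (rsum_ext _ _ (fun i => h t * (if Nat.leb i t then 1 else 0))).
   rewrite rsum_scal, count. rewrite Rmult_comm. apply Rmult_le_compat_r; auto.
   apply le_INR. lia.
   intros; destruct Nat.leb; lra. Qed.

Lemma rsum_S n f : rsum (S n) f = rsum n f + f n.
Proof. reflexivity. Qed.

Lemma trunc_bubble (M : nat -> R) tm k :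
  rsum (S tm + k) (fun t => INR (S t) * (if Nat.leb t tm then M t else 0)) = rsum (S tm) (fun t => INR (S t) * M t).
Proof. induction k. rewrite Nat.add_0_r. apply rsum_ext. intros t Ht. destruct (Nat.leb_spec t tm); [reflexivity|lia].
 rewrite Nat.add_succ_r. rewrite rsum_S. rewrite IHk. destruct (Nat.leb_spec (S tm + k) tm); [lia|]. lra. Qed.

Lemma runtime_bound n alpha : (1 <= INR n) -> 0 < alpha ->
  (INR (S (runtime n alpha)))^2 <= 7 * INR n.
Proof. intros Hn Ha. unfold runtime.
 set (x := Rpower (INR n) (/2 - alpha/3)).
 assert (Hx0 : 0 < x) by (unfold x, Rpower; apply exp_pos).
 assert (Hx2 : x * x <= INR n).
 { unfold x. rewrite <- Rpower_plus. rewrite <- (Rpower_1 (INR n)) at 2 by lra. apply Rle_Rpower; lra. }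
 assert (Hr : INR (Z.to_nat (Int_part (x + /2))) <= x + /2).
 { destruct (base_Int_part (x + /2)) as [H1 _]. destruct (Int_part (x + /2)) as [|p|p] eqn:E.
   simpl; lra. rewrite INR_IZR_INZ, Z2Nat.id by lia. auto. rewrite Z2Nat.inj_neg. simpl; lra. }
 rewrite S_INR. set (r := INR (Z.to_nat (Int_part (x + /2)))) in *. assert (0 <= r) by (apply pos_INR).
 assert ((r+1)^2 <= (x + 3/2)^2) by (apply pow_incr; lra).
 assert (3*x <= 3/2 * (x*x + 1)) by (pose proof (Rle_0_sqr (x-1)); unfold Rsqr in *; nra). simpl in *. nra. Qed.

Theorem mainTheorem5 (D alpha theta : R) (hD : 0 < D) (halpha : 0 < alpha)
  (htheta : 0 < theta) :
  exists C : R, exists N : nat, forall G : graph,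
    (N <= gn G)%nat ->
    simple_graph G -> connected G ->
    (* (bal) Delta(G)/delta(G) <= D *)
    (forall u w, (u < gn G)%nat -> (w < gn G)%nat -> deg G u <= D * deg G w) ->
    (* (mix) and (esc) *)
    (exists tm, is_tmix G tm /\
       INR tm <= Rpower (INR (gn G)) (/2 - alpha) /\ bubble G tm <= theta) ->
    forall v, (v < gn G)%nat ->
      expected_collisions G (runtime (gn G) alpha) v <= C / INR (gn G).
Proof.
  exists (D*theta + 11*D*D), 2%nat.
  intros G HN Hs Hc Hbal [tm [[Hmix _] [_ Hbub]]] v Hv.
  assert (Hdeg : forall x, (x < gn G)%nat -> 0 < deg G x).
  { intros x Hx. set (y := if Nat.eqb x 0 then 1%nat else 0%nat).
    assert (Hy : (y < gn G)%nat) by (unfold y; destruct (Nat.eqb_spec x 0); lia).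
    assert (Hxy : x <> y) by (unfold y; destruct (Nat.eqb_spec x 0); lia).
    destruct Hc as [_ Hr]. specialize (Hr x y Hx Hy).
    inversion Hr as [|x' w y' Hadj Hr']; [congruence|]. subst.
    destruct Hs as [_ [_ Hb]]. destruct (Hb _ _ Hadj) as [_ Hw].
    unfold deg. eapply Rlt_le_trans; [|apply (rsum_term _ _ w)].
    simpl. rewrite Hadj; lra. intros i _; destruct (adj G x i); lra. auto. }
  assert (Hn : 2 <= INR (gn G)) by (replace 2 with (INR 2) by (simpl; lra); apply le_INR; auto).
  set (n := gn G) in *.
  pose proof (Hdeg v Hv) as Hdv.
  assert (HT : INR n * (deg G v / D) <= twoE G).
  { unfold twoE. rewrite <- rsum_const. apply rsum_le. intros w Hw.
    specialize (Hbal v w Hv Hw). apply Rmult_le_reg_l with D; auto. field_simplify; lra. }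
  assert (HT0 : 0 < INR n * (deg G v / D)).
  { apply Rmult_lt_0_compat; [lra|]. unfold Rdiv. apply Rmult_lt_0_compat; auto. apply Rinv_0_lt_compat; auto. }
  assert (Hpi0 : 0 < pi G v).
  { unfold pi, Rdiv. apply Rmult_lt_0_compat; auto. apply Rinv_0_lt_compat; lra. }
  assert (Hpi : pi G v <= D / INR n).
  { unfold pi, Rdiv. apply Rle_trans with (deg G v * / (INR n * (deg G v / D))).
    apply Rmult_le_compat_l; [lra|]. apply Rinv_le_contravar; auto.
    right. field. split; lra. }
  assert (Hm : forall w, (w < n)%nat -> pt G tm w v <= 3/2 * pi G v).
  { intros w Hw. specialize (Hmix w v Hw Hv).
    pose proof (Rle_abs (pt G tm w v / pi G v - 1)).
    replace (pt G tm w v) with ((pt G tm w v / pi G v) * pi G v) by (field; lra).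
    apply Rmult_le_compat_r; lra. }
  assert (Hlate : forall t, (tm < t)%nat -> pt G t v v <= 3/2 * pi G v).
  { intros t Ht. replace t with ((t - tm) + tm)%nat by lia.
    rewrite <- CK by auto.
    apply Rle_trans with (rsum n (fun w => pt G (t - tm) v w * (3/2 * pi G v))).
    apply rsum_le. intros w Hw. apply Rmult_le_compat_l. apply pt_nonneg. auto.
    rewrite (rsum_ext _ _ (fun w => (3/2 * pi G v) * pt G (t - tm) v w)) by (intros; ring).
    rewrite rsum_scal. change n with (gn G). rewrite pt_row; auto. lra. }
  set (r := runtime n alpha).
  set (a := S r).
  unfold expected_collisions. fold n. fold r. fold a.
  rewrite (rsum_ext _ _ (fun u => rsum a (fun i => rsum a (fun j => pi G v * (pt G i v u * pt G j u v))))).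
  2:{ intros u Hu. apply rsum_ext; intros i _. apply rsum_ext; intros j _. unfold pi.
      replace (deg G u / twoE G * (pt G i u v * pt G j u v)) with ((deg G u * pt G i u v) * pt G j u v / twoE G) by (unfold Rdiv; ring).
      rewrite rev by auto. unfold Rdiv; ring. }
  rewrite rsum_swap.
  rewrite (rsum_ext _ _ (fun i => rsum a (fun j => pi G v * pt G (i+j) v v))).
  2:{ intros i _. rewrite rsum_swap. apply rsum_ext; intros j _. rewrite rsum_scal. change n with (gn G). rewrite CK by auto. reflexivity. }
  set (M := fun t => rmax n (fun w => pt G t w w)).
  set (h := fun t => if Nat.leb t tm then M t else 0).
  set (c := pi G v * (3/2 * pi G v)).
  apply Rle_trans with (rsum a (fun i => rsum a (fun j => pi G v * h (i+j)%nat + c))).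
  { apply rsum_le; intros i _. apply rsum_le; intros j _. unfold h, c.
    destruct (Nat.leb_spec (i+j) tm).
    - assert (pt G (i+j) v v <= M (i+j)%nat) by (unfold M; apply (rmax_ge n (fun w => pt G (i+j) w w)); auto).
      assert (0 <= pi G v * (3/2 * pi G v)) by nra. 
      assert (pi G v * pt G (i+j) v v <= pi G v * M (i+j)%nat) by (apply Rmult_le_compat_l; lra). lra.
    - rewrite Rmult_0_r, Rplus_0_l. apply Rmult_le_compat_l; [lra|]. apply Hlate; auto. }
  assert (Heq : rsum a (fun i => rsum a (fun j => pi G v * h (i+j)%nat + c)) =
     pi G v * rsum a (fun i => rsum a (fun j => h (i+j)%nat)) + INR a * (INR a * c)).
  { rewrite <- rsum_scal. rewrite <- (rsum_const a (INR a * c)). rewrite <- rsum_plus.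
    apply rsum_ext; intros i _. rewrite <- rsum_scal, <- (rsum_const a c), <- rsum_plus. reflexivity. }
  rewrite Heq.
  assert (Hh : forall t, 0 <= h t) by (intros; unfold h, M; destruct Nat.leb; [apply rmax_nonneg|lra]).
  assert (HB : rsum a (fun i => rsum a (fun j => h (i+j)%nat)) <= theta).
  { eapply Rle_trans. apply (double_sum h a a (S tm + (a + a))); auto; lia.
    unfold h. rewrite trunc_bubble. exact Hbub. }
  assert (HB0 : 0 <= rsum a (fun i => rsum a (fun j => h (i+j)%nat))) by (apply rsum_nonneg; intros; apply rsum_nonneg; auto).
  assert (Ha : (INR a)^2 <= 7 * INR n) by (apply runtime_bound; lra).
  assert (H1 : pi G v * rsum a (fun i => rsum a (fun j => h (i+j)%nat)) <= D / INR n * theta).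
  { apply Rle_trans with (pi G v * theta). apply Rmult_le_compat_l; lra. apply Rmult_le_compat_r; lra. }
  assert (H2 : INR a * (INR a * c) <= 7 * INR n * (3/2 * (D / INR n) * (D / INR n))).
  { unfold c. replace (INR a * (INR a * (pi G v * (3 / 2 * pi G v)))) with ((INR a)^2 * (3/2 * pi G v * pi G v)) by ring.
    apply Rmult_le_compat; try nra. }
  replace ((D * theta + 11 * D * D) / INR n) with (D / INR n * theta + 7 * INR n * (3/2 * (D / INR n) * (D / INR n)) + D*D/(2 * INR n)) by (field; lra).
  assert (0 <= D*D/(2*INR n)) by (apply Rmult_le_pos; [nra| left; apply Rinv_0_lt_compat; lra]).
  lra.
Qed.
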